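(* Let $m\ge2$ be an integer and let $A$ be a left brace with $A^{(3)}=A^{m+1}=\{0\}$. Let $a\in A$, and define $a_1=a$ and $a_{j+1}=a*a_j$ for $1\le j\le m-1$. Then for every $1\le k\le m-1$, \[(-a)*a_{m-k}=\sum_{j=1}^k(-1)^ja_{m-k+j}.\]
   Context: A left brace $(A,+,\cdot)$ is a set $A$ with two binary operations such that $(A,+)$ is an abelian group, $(A,\cdot)$ is a group, and $a(b+c)=ab-a+ac$ for all $a,b,c\in A$. In a left brace, $a*b=-a+ab-b$. For subsets $L,M\subseteq A$, $L*M$ is the subgroup of $(A,+)$ generated by $\{l*m\mid l\in L,m\in M\}$. Set $A^{(1)}=A$, $A^{(r+1)}=A^{(r)}*A$, and $A^1=A$, $A^{r+1}=A*A^r$ for $r\ge1$. *)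

(* Defs.v *)
From mathcomp Require Import all_boot all_order all_algebra.
Set Implicit Arguments. Unset Strict Implicit. Unset Printing Implicit Defensive.
Import GRing.Theory.
Local Open Scope ring_scope.

Record leftBrace (V : zmodType) := LeftBrace {
  bmul : V -> V -> V;
  bone : V;
  binv : V -> V;
  bmulA : forall x y z, bmul x (bmul y z) = bmul (bmul x y) z;
  bmul1l : forall x, bmul bone x = x;
  bmul1r : forall x, bmul x bone = x;
  bmulVl : forall x, bmul (binv x) x = bone;
  bmulVr : forall x, bmul x (binv x) = bone;
  bdist : forall a b c, bmul a (b + c) = bmul a b - a + bmul a c
}.

Section Brace.
Variables (V : zmodType) (B : leftBrace V).

Definition bstar (a b : V) : V := - a + bmul B a b - b.

Definition add_gen (S : V -> Prop) : V -> Prop :=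
  fun x => forall P : V -> Prop,
    P 0 -> (forall u v, P u -> P v -> P (u - v)) ->
    (forall u, S u -> P u) -> P x.

Definition bstar_set (L M : V -> Prop) : V -> Prop :=
  add_gen (fun x => exists l m, L l /\ M m /\ x = bstar l m).

(* right series A^(r): rser r = A^(r+1); left series A^r: lser r = A^(r+1) *)
Fixpoint rser (r : nat) : V -> Prop :=
  match r with
  | 0 => fun _ => True
  | r'.+1 => bstar_set (rser r') (fun _ => True)
  end.
Fixpoint lser (r : nat) : V -> Prop :=
  match r with
  | 0 => fun _ => True
  | r'.+1 => bstar_set (fun _ => True) (lser r')
  end.

Definition right_pow (r : nat) := rser r.-1.
Definition left_pow (r : nat) := lser r.-1.

Definition aseq (a : V) (j : nat) : V := iter j.-1 (bstar a) a.

End Brace.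

(* Main.v *)
Require Import Defs.
From mathcomp Require Import all_boot all_order all_algebra.
From mathcomp Require Import zify.
Set Implicit Arguments. Unset Strict Implicit.
Import GRing.Theory.
Local Open Scope ring_scope.

Section Pf.
Variables (V : zmodType) (B : leftBrace V).
Local Notation mul := (bmul B).
Definition lam (a x : V) := - a + mul a x.

Lemma mul_a0 a : mul a 0 = a.
Proof.
have := bdist B a 0 0; rewrite addr0 => H.
have : mul a 0 - a = 0.
  by apply: (addIr (mul a 0)); rewrite add0r -H.
by move/eqP; rewrite subr_eq0 => /eqP.
Qed.

Lemma one0 : bone B = 0.
Proof. by rewrite -(bmul1l B 0) mul_a0. Qed.

Lemma lamD a x y : lam a (x + y) = lam a x + lam a y.
Proof. by rewrite /lam bdist -!addrA. Qed.

Lemma lam0 a : lam a 0 = 0.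
Proof. by rewrite /lam mul_a0 addNr. Qed.

Lemma lamN a x : lam a (- x) = - lam a x.
Proof.
apply/eqP; rewrite -addr_eq0 -lamD addNr; apply/eqP; exact: lam0.
Qed.

Lemma mulE a x : mul a x = a + lam a x.
Proof. by rewrite /lam addrA addrN add0r. Qed.

Lemma lamM a b x : lam (mul a b) x = lam a (lam b x).
Proof.
rewrite /lam -bmulA.
have E : mul b x = b + (- b + mul b x) by rewrite addrA addrN add0r.
rewrite {1}E bdist.
by rewrite -[_ - a + _]addrA addKr.
Qed.

Lemma lam1 x : lam (bone B) x = x.
Proof. by rewrite /lam bmul1l one0 oppr0 add0r. Qed.

Lemma lam_inv u x : lam (binv B u) (lam u x) = x.
Proof. by rewrite -lamM bmulVl lam1. Qed.

Lemma lam_inv' u x : lam u (lam (binv B u) x) = x.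
Proof. by rewrite -lamM bmulVr lam1. Qed.

Lemma bstarE a x : bstar B a x = lam a x - x.
Proof. by []. Qed.

Lemma bstarD a x y : bstar B a (x + y) = bstar B a x + bstar B a y.
Proof. by rewrite !bstarE lamD opprD addrACA. Qed.

Lemma bstarN a x : bstar B a (- x) = - bstar B a x.
Proof. by rewrite !bstarE lamN opprB opprK addrC. Qed.

Lemma bstar0 a : bstar B a 0 = 0.
Proof. by rewrite bstarE lam0 subr0. Qed.

Lemma sgnS (x : V) j : x *~ ((-1) ^+ j.+1) = - (x *~ ((-1) ^+ j)).
Proof. by rewrite exprS mulN1r mulrNz. Qed.

Lemma bstar_sgn a x j : bstar B a (x *~ ((-1) ^+ j)) = bstar B a x *~ ((-1) ^+ j).
Proof. elim: j => [|j IH]; first by rewrite expr0 !mulr1z. by rewrite !sgnS bstarN IH. Qed.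

Hypothesis H3 : forall x, right_pow B 3 x -> x = 0.

Lemma gen_in (S : V -> Prop) x : S x -> add_gen S x.
Proof. by move=> Sx P _ _ H; apply: H. Qed.

Lemma star_triv x y z : lam (bstar B x y) z = z.
Proof.
have: right_pow B 3 (bstar B (bstar B x y) z).
  apply: gen_in; exists (bstar B x y), z; split; last by [].
  by apply: gen_in; exists x, y.
move/H3; rewrite bstarE => /eqP; rewrite subr_eq0 => /eqP //.
Qed.

Lemma star_triv_inv x y z : lam (binv B (bstar B x y)) z = z.
Proof. by rewrite -{1}(star_triv x y z) lam_inv. Qed.

Lemma mul_lam c w : mul c (lam (binv B c) w) = c + w.
Proof. by rewrite mulE lam_inv'. Qed.

Lemma star2_triv x y x' y' z : lam (bstar B x y + bstar B x' y') z = z.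
Proof.
rewrite -mul_lam star_triv_inv lamM star_triv star_triv //.
Qed.

Lemma lam_hom a b x : lam (a + b) x = lam a (lam b x).
Proof.
rewrite -lamM.
have E : mul a b = (a + b) + bstar B a b.
  by rewrite mulE bstarE -addrA [b + _]addrC subrK.
rewrite E -(mul_lam (a + b) (bstar B a b)) lamM.
have -> : lam (binv B (a + b)) (bstar B a b)
  = bstar B (binv B (a + b)) (bstar B a b) + bstar B a b.
  by rewrite bstarE addrNK.
by rewrite star2_triv.
Qed.

End Pf.

Lemma aseqS (V : zmodType) (B : leftBrace V) a j :
  (1 <= j)%N -> aseq B a j.+1 = bstar B a (aseq B a j).
Proof. by case: j => // j _; rewrite /aseq /= iterS. Qed.

Lemma aseq_lser (V : zmodType) (B : leftBrace V) a j : lser B j (aseq B a j.+1).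
Proof.
elim: j => [|j IH] //=.
rewrite aseqS //; apply: gen_in; exists a, (aseq B a j.+1); by [].
Qed.

Theorem mainTheorem10 (V : zmodType) (B : leftBrace V) (m : nat) :
  (2 <= m)%N ->
  (forall x, right_pow B 3 x -> x = 0) ->
  (forall x, left_pow B m.+1 x -> x = 0) ->
  forall (a : V) (k : nat), (1 <= k)%N -> (k <= m - 1)%N ->
    bstar B (- a) (aseq B a (m - k)) =
    \sum_(1 <= j < k.+1) (aseq B a (m - k + j)) *~ ((-1) ^+ j).
Proof.
move=> hm H3 Hm a k hk hkm.
set n := (m - k)%N.
have hn : (1 <= n)%N by rewrite /n; lia.
have hnk : (n + k = m)%N by rewrite /n; lia.
have Hz : aseq B a (n + k).+1 = 0 by apply: Hm; rewrite hnk; apply: aseq_lser.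
set F := fun j => aseq B a (n + j) *~ ((-1) ^+ j).
set S := \sum_(1 <= j < k.+1) F j.
set y := \sum_(0 <= j < k.+1) F j.
have Ey : y = aseq B a n + S.
  by rewrite /y /S big_nat_recl // big_add1 /F addn0 expr0 mulr1z.
have Hb : bstar B a y = \sum_(0 <= j < k.+1) aseq B a (n + j).+1 *~ ((-1) ^+ j).
  rewrite /y (big_morph (bstar B a) (bstarD B a) (bstar0 B a)).
  by apply: eq_bigr => j _; rewrite /F bstar_sgn -aseqS // addn_gt0 hn.
have Hy : lam B a y = aseq B a n.
  have -> : lam B a y = y + bstar B a y by rewrite bstarE addrC addrNK.
  rewrite Hb big_nat_recr //= Hz mul0rz addr0.
  rewrite {1}/y big_nat_recl // /F addn0 expr0 mulr1z -addrA.
  rewrite -big_split /= big1 ?addr0 // => j _.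
  by rewrite addnS sgnS addNr.
rewrite bstarE -{1}Hy -(lam_hom H3).
rewrite addNr -(one0 B) lam1 Ey.
by rewrite addrAC subrr add0r.
Qed.
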